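(* Let $q$ be a prime power and $n\ge 3$. There does not exist a Cameron-Liebler line class of $\mathrm{AG}(n,q)$ with parameter $x=2$.
   Context: $\mathrm{AG}(n,q)$ is $\mathrm{PG}(n,q)$ with a hyperplane $\pi_\infty$ removed; affine points are points outside $\pi_\infty$, affine lines are projective lines not contained in $\pi_\infty$. With $A_n$ the incidence matrix of affine points versus affine lines, a set $\mathcal{L}$ of affine lines is a Cameron-Liebler line class of $\mathrm{AG}(n,q)$ if its characteristic vector lies in the real row space $\mathrm{Im}(A_n^T)$; its parameter is $|\mathcal{L}|(q-1)/(q^n-1)$. *)

(* Defs.v *)
From HB Require Import structures.
From mathcomp Require Import all_boot all_order all_algebra all_field.
From mathcomp Require Import reals.
Set Implicit Arguments. Unset Strict Implicit. Unset Printing Implicit Defensive.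
Import Order.TTheory GRing.Theory Num.Theory.
Local Open Scope ring_scope.

(* AG(n,q) with F a finite field of order q: affine points are the row
   vectors 'rV[F]_n; an affine line is a set {a + t v | t in F} with v != 0. *)
Definition ag_point (F : finFieldType) (n : nat) := 'rV[F]_n.

Definition is_affine_line (F : finFieldType) (n : nat)
  (S : {set 'rV[F]_n}) : bool :=
  [exists a : 'rV[F]_n, exists v : 'rV[F]_n,
     (v != 0) && (S == [set a + t *: v | t : F])].

Definition affine_lines (F : finFieldType) (n : nat) : {set {set 'rV[F]_n}} :=
  [set S | is_affine_line S].

(* Incidence matrix A_n : affine points x affine lines, A(p,l) = [p \in l]. *)
(* chi_L in Im(A_n^T) (real row space): there is w : points -> R with
   chi_L(l) = sum_p A(p,l) w(p) = sum_{p in l} w(p) for every affine line l. *)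
Definition cameron_liebler_AG (R : realType) (F : finFieldType) (n : nat)
  (L : {set {set 'rV[F]_n}}) : Prop :=
  L \subset affine_lines F n /\
  exists w : 'rV[F]_n -> R,
    forall l, l \in affine_lines F n ->
      ((l \in L)%:R : R) = \sum_(p in l) w p.

Definition cl_parameter (R : realType) (F : finFieldType) (n : nat)
  (L : {set {set 'rV[F]_n}}) : R :=
  (#|L|%:R * (#|F|.-1)%:R) / (#|F| ^ n).-1%:R.

(* Main.v *)
Require Import Defs.
From HB Require Import structures.
From mathcomp Require Import all_boot all_order all_algebra all_field.
From mathcomp Require Import reals.
From mathcomp Require Import ring lra zify.

Ltac vec := apply/matrixP => ? ?; rewrite !mxE; ring.
Set Implicit Arguments. Unset Strict Implicit. Unset Printing Implicit Defensive.
Import Order.TTheory GRing.Theory Num.Theory.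
Local Open Scope ring_scope.

Section CL.
Variables (R : realType) (F : finFieldType) (n : nat).
Variable L : {set {set 'rV[F]_n}}.
Variable w : 'rV[F]_n -> R.
Hypothesis Hw : forall l, l \in affine_lines F n -> ((l \in L)%:R : R) = \sum_(p in l) w p.

Local Notation V := 'rV[F]_n.
Definition ln (a v : V) : {set V} := [set a + t *: v | t : F].
Definition cc (a v : V) : R := \sum_(t : F) w (a + t *: v).
Definition WW : R := \sum_x w x.

Lemma ln_affine a v : v != 0 -> ln a v \in affine_lines F n.
Proof.
move=> hv; rewrite inE; apply/existsP; exists a; apply/existsP; exists v.
by rewrite hv eqxx.
Qed.

Lemma cc_ln a v : v != 0 -> cc a v = ((ln a v \in L)%:R).
Proof.
move=> hv; rewrite Hw ?ln_affine // /ln big_imset /=; first by [].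
move=> t t' _ _ /addrI /eqP; rewrite -subr_eq0 -scalerBl scaler_eq0 (negbTE hv) orbF subr_eq0.
by move/eqP.
Qed.

Lemma cc01 a v : v != 0 -> cc a v = 0 \/ cc a v = 1.
Proof. by move=> hv; rewrite cc_ln //; case: (_ \in _); [right|left]. Qed.

Lemma cc_ge0 a v : v != 0 -> 0 <= cc a v.
Proof. by move=> hv; case: (cc01 a hv) => ->. Qed.

Lemma cc_shift a s v : cc (a + s *: v) v = cc a v.
Proof.
rewrite /cc [RHS](reindex_inj (addrI s)) /=.
by apply: eq_bigr => t _; rewrite scalerDl addrA.
Qed.

Lemma cc_tot v : \sum_x cc x v = #|F|%:R * WW.
Proof.
rewrite /cc exchange_big /=.
rewrite (eq_bigr (fun _ => WW)); first by rewrite sumr_const mulr_natl.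
move=> t _; by rewrite /WW [RHS](reindex_inj (addIr (t *: v))).
Qed.

Lemma lines_le (I : finType) (b : I -> V) v (g : V -> R) : v != 0 ->
  (forall k k' r, b k - b k' = r *: v -> k = k') -> (forall x, 0 <= g x) ->
  \sum_k \sum_(s : F) g (b k + s *: v) <= \sum_x g x.
Proof.
move=> hv hb hg; rewrite pair_bigA /=.
pose h (p : I * F) := b p.1 + p.2 *: v.
have hinj : {in [set: I * F] &, injective h}.
  move=> [k s] [k' s'] _ _; rewrite /h /= => e.
  have e1 : b k - b k' = (s' - s) *: v.
    by rewrite scalerBl -[b k](addrK (s *: v)) e addrAC [b k' + _]addrC addrK.
  have kk := hb _ _ _ e1; subst k'.
  move/addrI/eqP: e; rewrite -subr_eq0 -scalerBl scaler_eq0 (negbTE hv) orbF subr_eq0 => /eqP ->.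
  by [].
rewrite (_ : \sum_p g (b p.1 + p.2 *: v) = \sum_(p in [set: I * F]) g (h p)); last first.
  by apply: eq_bigl => p; rewrite inE.
rewrite -big_imset //= [X in _ <= X](bigID (mem (h @: [set: I * F]))) /=.
by rewrite lerDl sumr_ge0.
Qed.



Lemma cc_count (I : finType) (b : I -> V) v : v != 0 ->
  (forall k k' r, b k - b k' = r *: v -> k = k') -> \sum_k cc (b k) v <= WW.
Proof.
move=> hv hb; have := lines_le hv hb (fun x => cc_ge0 x hv).
rewrite cc_tot (eq_bigr (fun k => #|F|%:R * cc (b k) v)); last first.
  by move=> k _; rewrite (eq_bigr (fun _ => cc (b k) v)) ?sumr_const ?mulr_natl // => s _; rewrite cc_shift.
rewrite -mulr_sumr ler_pM2l // ltr0n; apply/card_gt0P; exists 0; by [].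
Qed.

Lemma sum_neq0_ex (I : finType) (P : pred I) (g : I -> R) :
  \sum_(i | P i) g i != 0 -> exists i, P i && (g i != 0).
Proof.
move=> h; case: (pickP (fun i => P i && (g i != 0))) => [i hi|h0]; first by exists i.
rewrite big1 ?eqxx // in h.
by move=> i Pi; move: (h0 i); rewrite /= Pi /= => /negbFE/eqP.
Qed.

Lemma two_le (I : finType) (g : I -> R) i j : i != j -> (forall k, 0 <= g k) ->
  g i + g j <= \sum_k g k.
Proof.
move=> hij hg; rewrite (bigD1 i) // (bigD1 j) /=; last by rewrite eq_sym.
by rewrite addrA lerDl sumr_ge0.
Qed.

Lemma one_le (I : finType) (g : I -> R) i : (forall k, 0 <= g k) -> g i <= \sum_k g k.
Proof. by move=> hg; rewrite (bigD1 i) //= lerDl sumr_ge0. Qed.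

Definition indep3 (X Y Z : V) := forall al be ga : F,
  al *: X + be *: Y + ga *: Z = 0 -> [/\ al = 0, be = 0 & ga = 0].

Lemma diff_aux (X Y e' f : V) (t t' r : F) :
  X + t *: e' - (Y + t' *: e') = r *: f -> (X - Y) + (t - t') *: e' + (- r) *: f = 0.
Proof. move=> h; rewrite scaleNr -h; vec. Qed.

Lemma plane_one z z' f e' : WW = 2 -> f != 0 -> cc z f = 1 -> cc z' f = 1 ->
  indep3 (z' - z) e' f -> \sum_(t : F) cc (z + t *: f) e' = 1.
Proof.
move=> W2 hf hz hz' hi.
pose b (k : bool * F) := (if k.1 then z' else z) + k.2 *: e'.
have hb : forall k k' r, b k - b k' = r *: f -> k = k'.
  move=> [i t] [i' t'] r; rewrite /b /= => /diff_aux h.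
  case: i i' h => [] [] h.
  - have := hi 0 (t - t') (- r).
    case; first by rewrite -[RHS]h; vec.
    by move=> _ /eqP; rewrite subr_eq0 => /eqP ->.
  - have := hi 1 (t - t') (- r).
    by case=> [|/eqP]; [rewrite -[RHS]h; vec | rewrite oner_eq0].
  - have := hi (-1) (t - t') (- r).
    case=> [|/eqP]; last by rewrite oppr_eq0 oner_eq0.
    by rewrite -[RHS]h; vec.
  - have := hi 0 (t - t') (- r).
    case; first by rewrite -[RHS]h; vec.
    by move=> _ /eqP; rewrite subr_eq0 => /eqP ->.
have H := cc_count hf hb.
rewrite (_ : \sum_(k : bool * F) cc (b k) f = \sum_(i : bool) \sum_(t : F) cc (b (i, t)) f) in H;
  last by rewrite [RHS]pair_bigA; apply: eq_bigr => -[].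
rewrite big_bool /b /= W2 in H.
have h1 : 1 <= \sum_(t : F) cc (z + t *: e') f.
  by have := @one_le _ (fun t => cc (z + t *: e') f) 0 (fun k => cc_ge0 _ hf); rewrite scale0r addr0 hz.
have h2 : 1 <= \sum_(t : F) cc (z' + t *: e') f.
  by have := @one_le _ (fun t => cc (z' + t *: e') f) 0 (fun k => cc_ge0 _ hf); rewrite scale0r addr0 hz'.
rewrite (_ : \sum_(t : F) cc (z + t *: f) e' = \sum_(t : F) cc (z + t *: e') f); first by lra.
rewrite /cc exchange_big; apply: eq_bigr => t _; apply: eq_bigr => s _.
by rewrite addrAC.
Qed.


Definition lin3 (d u e : V) (x y z : F) : V := x *: d + y *: u + z *: e.

Lemma lin3_inj d u e x y z x' y' z' : indep3 d u e ->
  lin3 d u e x y z = lin3 d u e x' y' z' -> [/\ x = x', y = y' & z = z'].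
Proof.
move=> hi h; have := hi (x - x') (y - y') (z - z').
case.
  rewrite (_ : (x - x') *: d + (y - y') *: u + (z - z') *: e = lin3 d u e x y z - lin3 d u e x' y' z').
    by rewrite h subrr.
  rewrite /lin3; vec.
by move=> /eqP; rewrite subr_eq0 => /eqP -> /eqP; rewrite subr_eq0 => /eqP -> /eqP; rewrite subr_eq0 => /eqP ->.
Qed.

Lemma indep3_lin3 d u e x1 x2 x3 y1 y2 y3 z1 z2 z3 : indep3 d u e ->
  (forall al be ga : F, al * x1 + be * y1 + ga * z1 = 0 -> al * x2 + be * y2 + ga * z2 = 0 ->
     al * x3 + be * y3 + ga * z3 = 0 -> [/\ al = 0, be = 0 & ga = 0]) ->
  indep3 (lin3 d u e x1 x2 x3) (lin3 d u e y1 y2 y3) (lin3 d u e z1 z2 z3).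
Proof.
move=> hi H al be ga h.
have : lin3 d u e (al * x1 + be * y1 + ga * z1) (al * x2 + be * y2 + ga * z2) (al * x3 + be * y3 + ga * z3)
   = lin3 d u e 0 0 0.
  rewrite -[RHS](_ : 0 = lin3 d u e 0 0 0); last by rewrite /lin3; vec.
  by rewrite -h /lin3; vec.
by case/(lin3_inj hi) => h1 h2 h3; apply: H.
Qed.

Lemma main_contra : (3 <= n)%N -> WW = 2 -> False.
Proof.
move=> n3 W2.
have q0 : (0 < #|F|)%N by apply/card_gt0P; exists 0.
have q2 : (1 < #|F|)%N by apply/card_gt1P; exists 0, 1; rewrite eq_sym oner_eq0.
have n0 : (0 < n)%N by apply: leq_trans n3.
pose d : V := const_mx 1.
have dn0 : d != 0.
  apply/eqP => /matrixP/(_ 0 (Ordinal n0))/eqP; rewrite !mxE; apply/negP; exact: oner_neq0.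
have tot := cc_tot d; rewrite W2 in tot.
have [a ha] : exists a, cc a d = 1.
  have : \sum_x cc x d != 0 by rewrite tot mulf_neq0 // pnatr_eq0 -lt0n.
  move/sum_neq0_ex => [a /= ha]; exists a.
  by case: (cc01 a dn0) ha => -> //; rewrite eqxx.
have [u [hu1 hu2]] : exists u, cc (a + u) d = 1 /\ forall r, u != r *: d.
  case: (pickP (fun b => (cc b d == 1) && [forall r : F, b - a != r *: d])) => [b /andP[/eqP hb /forallP hb2]|h0].
    by exists (b - a); split; [rewrite addrC subrK | by []].
  exfalso.
  have hle : forall x, cc x d <= ((x \in ln a d)%:R).
    move=> x; case: (cc01 x dn0) => hx; first by rewrite hx ler0n.
    move: (h0 x); rewrite hx eqxx /= => /negbT/forallPn [r]; rewrite negbK => /eqP hr.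
    rewrite (_ : x \in ln a d) //; apply/imsetP; exists r => //.
    by rewrite -hr addrC subrK.
  have : \sum_x cc x d <= #|F|%:R.
    apply: (le_trans (ler_sum _ (fun x _ => hle x))).
    rewrite (eq_bigr (fun x => if x \in ln a d then 1 else 0)); last by move=> x _; case: (_ \in _).
    rewrite -big_mkcond /= sumr_const ler_nat.
    exact: (leq_trans (leq_imset_card _ _) (max_card _)).
  by rewrite tot -natrM ler_nat; lia.
have [e he] : exists e, forall s t, e != s *: d + t *: u.
  case: (pickP (fun e => [forall st : F * F, e != st.1 *: d + st.2 *: u])) => [e /forallP he|h0].
    by exists e => s t; apply: (he (s, t)).
  exfalso.
  have hsub : [set: V] \subset (fun st : F * F => st.1 *: d + st.2 *: u) @: [set: F * F].
    apply/subsetP => x _; move: (h0 x) => /negbT/forallPn [[s t]]; rewrite negbK => /eqP ->.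
    by apply: imset_f; rewrite inE.
  have := leq_trans (subset_leq_card hsub) (leq_imset_card _ _).
  rewrite !cardsT card_mx card_prod mul1n mulnn.
  by rewrite leqNgt ltn_exp2l // n3.
have hi : indep3 d u e.
  move=> al be ga h.
  have hga : ga = 0.
    apply/eqP; apply: contraT => hg; exfalso.
    move: h; rewrite addrC => /eqP; rewrite addr_eq0 => /eqP h.
    have : e = (- (al / ga)) *: d + (- (be / ga)) *: u.
      rewrite -[e]scale1r -(mulVf hg) -scalerA h; vec.
    by move/eqP; rewrite (negbTE (he _ _)).
  rewrite hga scale0r addr0 in h.
  have hbe : be = 0.
    apply/eqP; apply: contraT => hg; exfalso.
    move: h; rewrite addrC => /eqP; rewrite addr_eq0 => /eqP h.
    have : u = (- (al / be)) *: d.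
      rewrite -[u]scale1r -(mulVf hg) -scalerA h; vec.
    by move/eqP; rewrite (negbTE (hu2 _)).
  rewrite hbe scale0r addr0 in h.
  by split=> //; move/eqP: h; rewrite scaler_eq0 (negbTE dn0) orbF => /eqP.
pose l3 := lin3 d u e.
pose pt x y z := a + l3 x y z.
have ex1 : forall (g : F -> V) v, v != 0 -> \sum_t cc (g t) v = 1 -> exists t, cc (g t) v = 1.
  move=> g v hv hs; have : \sum_t cc (g t) v != 0 by rewrite hs oner_eq0.
  move/sum_neq0_ex => [t /= ht]; exists t.
  by case: (cc01 (g t) hv) ht => -> //; rewrite eqxx.
have ptB : forall x y z x' y' z', pt x y z - pt x' y' z' = l3 (x - x') (y - y') (z - z').
  by move=> *; rewrite /pt /l3 /lin3; vec.
have ptZ : forall x y z x' y' z' s, pt x y z + s *: l3 x' y' z' = pt (x + s * x') (y + s * y') (z + s * z').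
  by move=> *; rewrite /pt /l3 /lin3; vec.
have l3inj : forall x y z x' y' z', l3 x y z = l3 x' y' z' -> [/\ x = x', y = y' & z = z'].
  by move=> x y z x' y' z' h; apply: lin3_inj hi h.
have ed : d = l3 1 0 0 by rewrite /l3 /lin3; vec.
have ee : e = l3 0 0 1 by rewrite /l3 /lin3; vec.
have ea : a = pt 0 0 0 by rewrite /pt /l3 /lin3; vec.
have eau : a + u = pt 0 1 0 by rewrite /pt /l3 /lin3; vec.
have en0 : l3 0 0 1 != 0.
  by rewrite -ee; apply/eqP => e0; move: (he 0 0); rewrite e0 !scale0r addr0 eqxx.
rewrite ed in dn0 ha hu1; rewrite ea in ha; rewrite eau in hu1.
have [t0 hx] : exists t0, cc (pt t0 0 0) (l3 0 0 1) = 1.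
  suff hI : indep3 (pt 0 1 0 - pt 0 0 0) (l3 0 0 1) (l3 1 0 0).
    have [t] := ex1 _ _ en0 (plane_one W2 dn0 ha hu1 hI).
    by rewrite ptZ mulr1 mulr0 !add0r => ht; exists t.
  rewrite ptB; apply: indep3_lin3 => // al be ga h1 h2 h3.
  by split; [rewrite -[RHS]h2 | rewrite -[RHS]h3 | rewrite -[RHS]h1]; ring.
have [t1 hy] : exists t1, cc (pt t1 1 0) (l3 0 0 1) = 1.
  suff hI : indep3 (pt 0 0 0 - pt 0 1 0) (l3 0 0 1) (l3 1 0 0).
    have [t] := ex1 _ _ en0 (plane_one W2 dn0 hu1 ha hI).
    by rewrite ptZ mulr1 !mulr0 !add0r addr0 => ht; exists t.
  rewrite ptB; apply: indep3_lin3 => // al be ga h1 h2 h3.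
  split; [rewrite -[RHS]oppr0 -[in RHS]h2 | rewrite -[RHS]h3 | rewrite -[RHS]h1]; ring.
have fn0 : l3 (t1 - t0) 1 0 != 0.
  apply/eqP => h; have : l3 (t1 - t0) 1 0 = l3 0 0 0 by rewrite h /l3 /lin3; vec.
  by case/l3inj => _ /eqP; rewrite oner_eq0.
have hB : 2 <= \sum_s cc (pt (t0 + s) 0 0) (l3 (t1 - t0) 1 0).
  have -> : \sum_s cc (pt (t0 + s) 0 0) (l3 (t1 - t0) 1 0) = \sum_t cc (pt 0 t 0) (l3 1 0 0).
    rewrite /cc exchange_big; apply: eq_bigr => t _.
    rewrite [RHS](reindex_inj (addrI (t0 + t * (t1 - t0)))); apply: eq_bigr => s _; congr w.
    rewrite /pt /l3 /lin3; vec.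
  have := two_le (g := fun t => cc (pt 0 t 0) (l3 1 0 0)) (oner_neq0 F) (fun k => cc_ge0 _ dn0).
  by rewrite /= -/(pt 0 0 0) hu1 ha.
pose f := l3 (t1 - t0) 1 0.
have [s1 hs1] : exists s1, cc (pt (t0 + s1) 0 0) f = 1.
  have : \sum_s cc (pt (t0 + s) 0 0) f != 0 by apply/eqP => h0; rewrite /f h0 in hB; lra.
  move/sum_neq0_ex => [s /= hs]; exists s.
  by case: (cc01 (pt (t0 + s) 0 0) fn0) hs => -> //; rewrite eqxx.
have [s2 /andP[hne hs2]] : exists s2, (s2 != s1) && (cc (pt (t0 + s2) 0 0) f != 0).
  apply: sum_neq0_ex; apply/eqP => h0.
  by move: hB; rewrite (bigD1 s1) //= -/f hs1 h0 => ?; lra.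
have {}hs2 : cc (pt (t0 + s2) 0 0) f = 1.
  by case: (cc01 (pt (t0 + s2) 0 0) fn0) hs2 => -> //; rewrite eqxx.
have [sa [sb [hsa hab ha' hb']]] : exists sa sb, [/\ sa != 0, sb != sa,
    cc (pt (t0 + sa) 0 0) f = 1 & cc (pt (t0 + sb) 0 0) f = 1].
  case: (eqVneq s1 0) => h10.
  - by exists s2, s1; split => //; [rewrite -h10 | rewrite eq_sym].
  - by exists s1, s2.
have [ts hp0] : exists ts, cc (pt (t0 + sa + ts * (t1 - t0)) ts 0) (l3 0 0 1) = 1.
  suff hI : indep3 (pt (t0 + sb) 0 0 - pt (t0 + sa) 0 0) (l3 0 0 1) f.
    have [t] := ex1 _ _ en0 (plane_one W2 fn0 ha' hb' hI).
    by rewrite /f ptZ mulr1 !mulr0 !add0r => ht; exists t.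
  rewrite ptB /f; apply: indep3_lin3 => // al be ga h1 h2 h3.
  have hga : ga = 0 by rewrite -[RHS]h2; ring.
  have hbe : be = 0 by rewrite -[RHS]h3; ring.
  split => //.
  have : al * (sb - sa) = 0 by rewrite -[RHS]h1 hga; ring.
  move/eqP; rewrite mulf_eq0 subr_eq0 (negbTE hab) orbF => /eqP //.
pose b (k : option bool) := match k with
  | None => pt (t0 + sa + ts * (t1 - t0)) ts 0
  | Some false => pt t0 0 0
  | Some true => pt t1 1 0 end.
have hb : forall k k' r, b k - b k' = r *: l3 0 0 1 -> k = k'.
  move=> k k' r; have -> : r *: l3 0 0 1 = l3 0 0 r by rewrite /l3 /lin3; vec.
  case: k k' => [[]|] [[]|] //=; rewrite ptB => /l3inj [h1 h2 h3].
  - by move/eqP: h2; rewrite subr0 oner_eq0.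
  - move/subr0_eq: h2 => ets; subst ts.
    have : - sa = 0 by rewrite -[RHS]h1; ring.
    by move/eqP; rewrite oppr_eq0 (negbTE hsa).
  - by move/eqP: h2; rewrite sub0r oppr_eq0 oner_eq0.
  - move/subr0_eq: h2 => ets; subst ts.
    have : - sa = 0 by rewrite -[RHS]h1; ring.
    by move/eqP; rewrite oppr_eq0 (negbTE hsa).
  - move/subr0_eq: h2 => ets; subst ts.
    have : sa = 0 by rewrite -[RHS]h1; ring.
    by move/eqP; rewrite (negbTE hsa).
  - move/subr0_eq: h2 => ets; subst ts.
    have : sa = 0 by rewrite -[RHS]h1; ring.
    by move/eqP; rewrite (negbTE hsa).
have H := cc_count en0 hb; rewrite W2 in H.
have e3 : \sum_k cc (b k) (l3 0 0 1) = 3.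
  rewrite (eq_bigr (fun _ => 1)); first by rewrite sumr_const card_option card_bool.
  by case => [[]|] _.
by rewrite e3 in H; lra.
Qed.


Lemma sum_const_pred (I : finType) (P : pred I) (x : R) :
  \sum_(i | P i) x = x *+ #|[set i | P i]|.
Proof. by rewrite -sumr_const; apply: eq_bigl => i; rewrite inE. Qed.

Lemma sc_inj (v : V) (t t' : F) : v != 0 -> t *: v = t' *: v -> t = t'.
Proof.
move=> hv /eqP; rewrite -subr_eq0 -scalerBl scaler_eq0 (negbTE hv) orbF subr_eq0.
by move/eqP.
Qed.

Lemma card_reps l : l \in affine_lines F n ->
  #|[set pr : V * V | (pr.2 != 0) && (ln pr.1 pr.2 == l)]| = (#|F| * #|F|.-1)%N.
Proof.
rewrite inE => /existsP [a /existsP [v0 /andP [hv0 /eqP ->]]].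
rewrite -/(ln a v0).
have -> : [set pr : V * V | (pr.2 != 0) && (ln pr.1 pr.2 == ln a v0)] =
    (fun tl : F * F => (a + tl.1 *: v0, tl.2 *: v0)) @: [set tl : F * F | tl.2 != 0].
  apply/setP => -[x v]; rewrite inE /=; apply/idP/idP.
  - case/andP => hv /eqP hl.
    have : x \in ln x v by apply/imsetP; exists 0 => //; rewrite scale0r addr0.
    rewrite hl => /imsetP [t _ hx].
    have : x + 1 *: v \in ln x v by apply/imsetP; exists 1.
    rewrite hl => /imsetP [t' _ hv1].
    have ev : v = (t' - t) *: v0.
      have -> : v = (x + 1 *: v) - x by vec.
      rewrite hv1 hx; vec.
    apply/imsetP; exists (t, t' - t).
      rewrite inE /=; apply: contra hv => /eqP h; by rewrite ev h scale0r.
    by rewrite /= -hx -ev.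
  - case/imsetP => -[t la]; rewrite inE /= => hla [-> ->].
    rewrite scaler_eq0 (negbTE hla) (negbTE hv0) /=.
    apply/eqP/setP => y; apply/imsetP/imsetP => -[s _ ->].
    + by exists (t + s * la) => //; vec.
    + exists ((s - t) / la) => //.
      by rewrite scalerA divfK //; vec.
rewrite card_imset; last first.
  move=> [t la] [t' la'] /= [] /addrI /(sc_inj hv0) -> /(sc_inj hv0) -> //.
rewrite (_ : [set tl : F * F | tl.2 != 0] = setX [set: F] [set~ 0]).
  by rewrite cardsX cardsT cardsC1.
by apply/setP => -[x y]; rewrite !inE.
Qed.

Lemma W_is_2 : L \subset affine_lines F n -> (0 < n)%N -> cl_parameter R L = 2 -> WW = 2.
Proof.
move=> HL n0 hpar.
have q2 : (1 < #|F|)%N by apply/card_gt1P; exists 0, 1; rewrite eq_sym oner_eq0.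
pose S := \sum_(v in [set~ (0 : V)]) \sum_x cc x v.
have S1 : S = ((#|F| ^ n).-1)%:R * (#|F|%:R * WW).
  rewrite /S (eq_bigr (fun _ => #|F|%:R * WW)); last by move=> v _; exact: cc_tot.
  by rewrite sumr_const cardsC1 card_mx mul1n [RHS]mulr_natl.
have S2 : S = #|L|%:R * (#|F| * #|F|.-1)%:R.
  rewrite /S (eq_bigr (fun v => \sum_x ((ln x v \in L)%:R))); last first.
    by move=> v; rewrite !inE => hv; apply: eq_bigr => x _; exact: cc_ln.
  rewrite exchange_big pair_big /=.
  rewrite (partition_big (fun pr : V * V => ln pr.1 pr.2) (fun l => l \in affine_lines F n)) /=; last first.
    by move=> [x v] /= hv; apply: ln_affine; move: hv; rewrite !inE.
  rewrite (eq_bigr (fun l => (l \in L)%:R * (#|F| * #|F|.-1)%:R)); last first.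
    move=> l hl.
    rewrite (eq_bigr (fun _ => (l \in L)%:R)); last by move=> pr /andP [_ /eqP ->].
    rewrite sum_const_pred (_ : #|_| = (#|F| * #|F|.-1)%N) ?mulr_natr //.
    rewrite -(card_reps hl); apply: eq_card => pr; rewrite !inE.
    by [].
  rewrite -mulr_suml; congr (_ * _).
  rewrite (eq_bigr (fun l => if l \in L then 1 else 0)); last by move=> l _; case: (_ \in _).
  rewrite -big_mkcondr sum_const_pred; congr (_ *+ _); apply: eq_card => l; rewrite inE.
  case lL: (l \in L); rewrite ?andbT ?andbF //; exact: (subsetP HL).
have hA : ((#|F| ^ n).-1)%:R != 0 :> R.
  rewrite pnatr_eq0 -lt0n -subn1 subn_gt0.
  by have := ltn_exp2l 0 n q2; rewrite expn0 n0.
have hQ : #|F|%:R != 0 :> R by rewrite pnatr_eq0 -lt0n ltnW.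
have hp : #|L|%:R * (#|F|.-1)%:R = 2 * ((#|F| ^ n).-1)%:R :> R.
  by rewrite -hpar /cl_parameter divfK.
apply: (mulfI (mulf_neq0 hA hQ)).
rewrite -mulrA -S1 S2 natrM.
rewrite (_ : #|L|%:R * (#|F|%:R * (#|F|.-1)%:R) = #|F|%:R * (#|L|%:R * (#|F|.-1)%:R)); last by ring.
rewrite hp; ring.
Qed.

End CL.

Theorem theorem6p8 (R : realType) (F : finFieldType) (n : nat) :
  (3 <= n)%N ->
  ~ exists L : {set {set 'rV[F]_n}},
      cameron_liebler_AG R L /\ cl_parameter R L = 2.
Proof.
move=> n3 [L [[HL [w Hw]] hpar]].
have n0 : (0 < n)%N by apply: leq_trans n3.
exact: (main_contra Hw n3 (W_is_2 Hw HL n0 hpar)).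
Qed.
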